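(* For all real numbers $a,b,c>0$, \[ \frac{2a}{\sqrt{2a^2+b^2+c^2}}+\frac{2b}{\sqrt{2b^2+c^2+a^2}}+\frac{2c}{\sqrt{2c^2+a^2+b^2}}\leq \frac{3\sqrt{2}\,(a+b+c)}{\sqrt{5a^2+5b^2+5c^2+ab+bc+ca}}. \] *)

(* Defs.v *)
From Stdlib Require Import Reals Lra.

(* Main.v *)
Require Import Defs.
From Stdlib Require Import Reals Lra.
Open Scope R_scope.

Definition Pf (a b c : R) : R :=
  let S := a^2+b^2+c^2 in let D := 5*S+a*b+b*c+c*a in
  9*(a+b+c)*((S+a^2)*(S+b^2)*(S+c^2))
  - 2*D*(a*(S+b^2)*(S+c^2)+b*(S+a^2)*(S+c^2)+c*(S+a^2)*(S+b^2)).

Definition Qf (c x y : R) : R := 8*c^0*x^0*y^7 + 52*c^0*x^1*y^6 + 163*c^0*x^2*y^5 + 322*c^0*x^3*y^4 + 425*c^0*x^4*y^3 + 380*c^0*x^5*y^2 + 210*c^0*x^6*y^1 + 60*c^0*x^7*y^0 + 48*c^1*x^0*y^6 + 292*c^1*x^1*y^5 + 839*c^1*x^2*y^4 + 1430*c^1*x^3*y^3 + 1555*c^1*x^4*y^2 + 1008*c^1*x^5*y^1 + 336*c^1*x^6*y^0 + 148*c^2*x^0*y^5 + 790*c^2*x^1*y^4 + 1876*c^2*x^2*y^3 + 2564*c^2*x^3*y^2 + 1970*c^2*x^4*y^1 + 788*c^2*x^5*y^0 + 280*c^3*x^0*y^4 + 1168*c^3*x^1*y^3 + 2152*c^3*x^2*y^2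 + 1968*c^3*x^3*y^1 + 984*c^3*x^4*y^0 + 304*c^4*x^0*y^3 + 936*c^4*x^1*y^2 + 984*c^4*x^2*y^1 + 656*c^4*x^3*y^0 + 192*c^5*x^0*y^2 + 192*c^5*x^1*y^1 + 192*c^5*x^2*y^0.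

Lemma Qf_nonneg c x y : 0 <= c -> 0 <= x -> 0 <= y -> 0 <= Qf c x y.
Proof.
  intros; unfold Qf.
  repeat first [apply Rplus_le_le_0_compat | apply Rmult_le_pos | apply pow_le | lra].
Qed.

Lemma ordered a b c : 0 <= c -> c <= b -> b <= a -> 0 <= Pf a b c.
Proof.
  intros.
  assert (E : Pf a b c = Qf c (b - c) (a - b)) by (unfold Pf, Qf; ring).
  rewrite E; apply Qf_nonneg; lra.
Qed.

Lemma Pf_nonneg a b c : 0 <= a -> 0 <= b -> 0 <= c -> 0 <= Pf a b c.
Proof.
  intros.
  assert (Q1 : Pf a b c = Pf a c b) by (unfold Pf; ring).
  assert (Q2 : Pf a b c = Pf b a c) by (unfold Pf; ring).
  assert (Q3 : Pf a b c = Pf b c a) by (unfold Pf; ring).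
  assert (Q4 : Pf a b c = Pf c a b) by (unfold Pf; ring).
  assert (Q5 : Pf a b c = Pf c b a) by (unfold Pf; ring).
  destruct (Rle_or_lt a b), (Rle_or_lt b c), (Rle_or_lt a c);
  first [ apply ordered; lra
        | rewrite Q1; apply ordered; lra
        | rewrite Q2; apply ordered; lra
        | rewrite Q3; apply ordered; lra
        | rewrite Q4; apply ordered; lra
        | rewrite Q5; apply ordered; lra ].
Qed.

Lemma term (a s t : R) : 0 < a -> 0 < s -> 0 < t ->
  2 * a / s <= a * (s^2 + t^2) / (s^2 * t).
Proof.
  intros.
  assert (E : a * (s^2 + t^2) / (s^2 * t) - 2 * a / s = a * (s - t)^2 / (s^2 * t))
    by (field; lra).
  assert (0 <= a * (s - t)^2 / (s^2 * t)).
  { apply Rmult_le_pos.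
    - apply Rmult_le_pos; [lra | apply pow2_ge_0].
    - left; apply Rinv_0_lt_compat; apply Rmult_lt_0_compat; [apply pow_lt|]; lra. }
  lra.
Qed.

Theorem mainTheorem4 (a b c : R) (ha : 0 < a) (hb : 0 < b) (hc : 0 < c) :
  2 * a / sqrt (2 * a ^ 2 + b ^ 2 + c ^ 2)
  + 2 * b / sqrt (2 * b ^ 2 + c ^ 2 + a ^ 2)
  + 2 * c / sqrt (2 * c ^ 2 + a ^ 2 + b ^ 2)
  <= 3 * sqrt 2 * (a + b + c)
     / sqrt (5 * a ^ 2 + 5 * b ^ 2 + 5 * c ^ 2 + a * b + b * c + c * a).
Proof.
  set (Xa := 2 * a ^ 2 + b ^ 2 + c ^ 2).
  set (Xb := 2 * b ^ 2 + c ^ 2 + a ^ 2).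
  set (Xc := 2 * c ^ 2 + a ^ 2 + b ^ 2).
  set (D := 5 * a ^ 2 + 5 * b ^ 2 + 5 * c ^ 2 + a * b + b * c + c * a).
  assert (pXa : 0 < Xa) by (unfold Xa; nra).
  assert (pXb : 0 < Xb) by (unfold Xb; nra).
  assert (pXc : 0 < Xc) by (unfold Xc; nra).
  assert (pD : 0 < D) by (unfold D; nra).
  assert (sa : 0 < sqrt Xa) by (apply sqrt_lt_R0; lra).
  assert (sb : 0 < sqrt Xb) by (apply sqrt_lt_R0; lra).
  assert (sc : 0 < sqrt Xc) by (apply sqrt_lt_R0; lra).
  assert (sd : 0 < sqrt D) by (apply sqrt_lt_R0; lra).
  assert (s2 : 0 < sqrt 2) by (apply sqrt_lt_R0; lra).
  assert (ea : sqrt Xa ^ 2 = Xa) by (simpl; rewrite Rmult_1_r; apply sqrt_sqrt; lra).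
  assert (eb : sqrt Xb ^ 2 = Xb) by (simpl; rewrite Rmult_1_r; apply sqrt_sqrt; lra).
  assert (ec : sqrt Xc ^ 2 = Xc) by (simpl; rewrite Rmult_1_r; apply sqrt_sqrt; lra).
  assert (ed : sqrt D * sqrt D = D) by (apply sqrt_sqrt; lra).
  assert (e2 : sqrt 2 * sqrt 2 = 2) by (apply sqrt_sqrt; lra).
  set (t := sqrt 2 * sqrt D / 3).
  assert (pt : 0 < t) by (unfold t; apply Rmult_lt_0_compat; [apply Rmult_lt_0_compat|]; lra).
  assert (et : t ^ 2 = 2 * D / 9).
  { unfold t. replace ((sqrt 2 * sqrt D / 3) ^ 2) with ((sqrt 2 * sqrt 2) * (sqrt D * sqrt D) / 9) by field.
    rewrite e2, ed; field. }
  pose proof (term a (sqrt Xa) t ha sa pt) as Ta.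
  pose proof (term b (sqrt Xb) t hb sb pt) as Tb.
  pose proof (term c (sqrt Xc) t hc sc pt) as Tc.
  rewrite ea, et in Ta. rewrite eb, et in Tb. rewrite ec, et in Tc.
  assert (HP := Pf_nonneg a b c ltac:(lra) ltac:(lra) ltac:(lra)).
  assert (K : a * (Xa + 2 * D / 9) / (Xa * t) + b * (Xb + 2 * D / 9) / (Xb * t)
            + c * (Xc + 2 * D / 9) / (Xc * t) <= 2 * (a + b + c) / t).
  { assert (E : 2 * (a + b + c) / t - (a * (Xa + 2 * D / 9) / (Xa * t) + b * (Xb + 2 * D / 9) / (Xb * t)
            + c * (Xc + 2 * D / 9) / (Xc * t)) = Pf a b c / (9 * Xa * Xb * Xc * t)).
    { unfold Pf, Xa, Xb, Xc, D. field. unfold Xa, Xb, Xc in *; repeat split; lra. }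
    assert (0 <= Pf a b c / (9 * Xa * Xb * Xc * t)).
    { apply Rmult_le_pos; [lra|]. left; apply Rinv_0_lt_compat.
      repeat apply Rmult_lt_0_compat; lra. }
    lra. }
  assert (E2 : 2 * (a + b + c) / t = 3 * sqrt 2 * (a + b + c) / sqrt D).
  { unfold t. replace (3 * sqrt 2 * (a + b + c)) with (3 * (sqrt 2 * sqrt 2) * (a + b + c) / sqrt 2) by (field; lra).
    rewrite e2. field. lra. }
  lra.
Qed.
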